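(* Let $p$ and $q$ be distinct odd primes and $x,y$ nonzero integers with $x^p-y^q=1$. Let $G=\mathrm{Gal}(\mathbb{Q}(\zeta_p)/\mathbb{Q})$ and $$X=\{\theta\in\mathbb{Z}[G]\;:\;\exists\,\alpha\in\mathbb{Q}(\zeta_p)^* \text{ with } (x-\zeta_p)^\theta=\alpha^q\}.$$ Then $X$ is an additive subgroup of $\mathbb{Z}[G]$, for each $\theta\in X$ the element $\alpha\in\mathbb{Q}(\zeta_p)^*$ with $(x-\zeta_p)^\theta=\alpha^q$ is unique, and the map $X\to\mathbb{Q}(\zeta_p)^*$, $\theta\mapsto\alpha$, is an injective group homomorphism.
   Context: $\zeta_p=e^{2i\pi/p}$. The group ring $\mathbb{Z}[G]$ acts exponentially on $\mathbb{Q}(\zeta_p)^*$: for $\theta=\sum_{\tau\in G}n_\tau\tau$ and $z\in\mathbb{Q}(\zeta_p)^*$, $z^\theta=\prod_{\tau\in G}\tau(z)^{n_\tau}$. *)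

(* Defs.v *)
From HB Require Import structures.
From mathcomp Require Import all_boot all_order all_algebra all_fingroup all_solvable all_field.
Set Implicit Arguments. Unset Strict Implicit. Unset Printing Implicit Defensive.
Import GRing.Theory Num.Theory.
Local Open Scope ring_scope.

(* The number field L plays the role of Q(zeta_p); its Galois group over Q is
   gal_of (fullv : {vspace L}) (all automorphisms of L fixing the base field rat). *)
Definition galQ (L : splittingFieldType rat) := gal_of (fullv : {vspace L}).

(* The group ring Z[G], with G = Gal(L/Q): integer-valued functions on G. *)
Definition ZG (L : splittingFieldType rat) := {ffun galQ L -> int}.

Definition zgact (L : splittingFieldType rat) (theta : ZG L) (w : L) : L :=
  \prod_(tau : galQ L) (tau w) ^ (theta tau).

(* Main.v *)
Require Import Defs.
From HB Require Import structures.
From mathcomp Require Import all_boot all_order all_algebra all_fingroup all_solvable all_field.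
From mathcomp Require Import zify.
From Stdlib Require Import ClassicalEpsilon.
Import GRing.Theory Num.Theory.
Local Open Scope ring_scope.

Lemma Xn1_Phi (F : fieldType) m (v : F) : (0 < m)%N ->
  (v ^+ m == 1) = has (fun d => root (map_poly intr 'Phi_d) v) (divisors m).
Proof.
move=> m0.
have -> : (v ^+ m == 1) =
   root (\prod_(p <- [seq map_poly (intr : int -> F) 'Phi_d | d <- divisors m]) p) v.
  rewrite big_map -rmorph_prod prod_Cyclotomic //.
  by rewrite rmorphB /= rmorph1 map_polyXn /root !hornerE subr_eq0.
rewrite -[root _ _]negbK root_bigmul all_map.
apply/idP/hasP => [/allPn[d dD /negbNE rd]|[d dD rd]]; first by exists d.
apply/allPn; exists d => //=. by rewrite negbK.
Qed.

Lemma Phi_root (F : fieldType) n (w : F) :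
  n.-primitive_root w -> root (map_poly intr 'Phi_n) w.
Proof.
move=> pw; have n0 := prim_order_gt0 pw.
have /hasP[d] : has (fun d => root (map_poly intr 'Phi_d) w) (divisors n).
  by rewrite -Xn1_Phi // prim_expr_order.
rewrite -dvdn_divisors // => dn rd.
have d0 : (0 < d)%N by apply: (dvdn_gt0 n0 dn).
have /eqP wd : w ^+ d == 1.
  by rewrite Xn1_Phi //; apply/hasP; exists d => //; rewrite -dvdn_divisors.
have nd : (n %| d)%N by rewrite (prim_order_dvd pw) wd.
by have -> : n = d by apply/eqP; rewrite eqn_dvd nd dn.
Qed.

Lemma cyclo_min (L : fieldExtType rat) n (w : L) (P : {poly rat}) :
  n.-primitive_root w -> root (map_poly (in_alg L) P) w ->
  map_poly (intr : int -> rat) 'Phi_n %| P.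
Proof.
move=> pw rP; have n0 := prim_order_gt0 pw.
set Phi := map_poly (intr : int -> rat) 'Phi_n.
have Phi0 : Phi != 0.
  by apply: monic_neq0; apply: monic_map; apply: Cyclotomic_monic.
set g := gcdp P Phi.
have PhiL : map_poly (in_alg L) Phi = map_poly intr 'Phi_n.
  by rewrite -map_poly_comp; apply: eq_map_poly => a; exact: (rmorph_int (in_alg L)).
have rg : root (map_poly (in_alg L) g) w.
  by rewrite gcdp_map root_gcd rP PhiL Phi_root.
have g0 : g != 0 by rewrite gcdp_eq0 negb_and Phi0 orbT.
have sg : size g != 1%N.
  have mg0 : map_poly (in_alg L) g != 0 by rewrite map_poly_eq0.
  have := root_size_gt1 mg0 rg; rewrite size_map_poly.
  by case: (size g) => [|[]].
have [z rz] : exists z, root (map_poly (ratr : rat -> algC) g) z.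
  by apply/closed_rootP; rewrite size_map_poly.
have [z0 pz0] := C_prim_root_exists n0.
have PhiC : map_poly (ratr : rat -> algC) Phi = cyclotomic z0 n.
  by rewrite -(Cintr_Cyclotomic pz0) -map_poly_comp; apply: eq_map_poly => a /=; rewrite rmorph_int.
have pz : n.-primitive_root z.
  rewrite -(root_cyclotomic pz0) -PhiC.
  by apply: root_dvdp rz; rewrite dvdp_map dvdp_gcdr.
have [pf [Dpf _] dv] := minCpolyP z.
have epf : pf = Phi.
  apply: (@map_inj_poly _ _ (ratr : rat -> algC)); [exact: fmorph_inj | exact: rmorph0 |].
  rewrite -Dpf (minCpoly_cyclotomic pz) -(Cintr_Cyclotomic pz) -map_poly_comp.
  by apply: eq_map_poly => a /=; rewrite rmorph_int.
apply: (dvdp_trans _ (dvdp_gcdl P Phi)).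
by rewrite -[X in X %| _]epf -dv.
Qed.

Lemma Nbinom0 (p : nat) (u : int) : u != 0 ->
  \sum_(i < p) (u + 1) ^+ i = \sum_(j < p) u ^+ j *+ 'C(p, j.+1).
Proof.
move=> u0; apply: (mulfI u0).
have -> : u * \sum_(i < p) (u + 1) ^+ i = (u + 1) ^+ p - 1 by rewrite subrX1 addrK.
rewrite exprD1n big_ord_recl /= expr0 bin0 mulr1n addrC addKr.
rewrite mulr_sumr; apply: eq_bigr => j _.
by rewrite exprS mulrnAr.
Qed.

Lemma Nbinom (p : nat) (x : int) : x != 1 ->
  \sum_(i < p) x ^+ i = \sum_(j < p) (x - 1) ^+ j *+ 'C(p, j.+1).
Proof.
move=> x1; have u0 : x - 1 != 0 by rewrite subr_eq0.
by rewrite -Nbinom0 // subrK.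
Qed.

Lemma Nmod (p : nat) (x : int) : prime p -> odd p -> x != 1 ->
  (p%:Z %| \sum_(i < p) x ^+ i)%Z -> (p%:Z ^+ 2 %| \sum_(i < p) x ^+ i - p%:Z)%Z.
Proof.
move=> pp op x1; rewrite (Nbinom p x x1); set u := x - 1.
have p2 : (2 < p)%N.
  by have := prime_gt1 pp; case: p op {pp} => [|[|[|]]].
case: p pp op p2 => [//|p'] pp op p2.
have hS : (p'.+1%:Z %| \sum_(j < p') u ^+ j *+ 'C(p'.+1, j.+1))%Z.
  apply: rpred_sum => j _; rewrite -mulr_natr; apply: dvdz_mull.
  rewrite dvdzE absz_nat natz absz_nat; apply: prime_dvd_bin => //=; by rewrite ltnS ltn_ord.
rewrite big_ord_recr /= binn mulr1n => hN.
have hu : (p'.+1%:Z %| u)%Z.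
  have : (p'.+1%:Z %| u ^+ p')%Z.
    by have := rpredB hN hS; rewrite addrAC subrr add0r.
  rewrite !dvdzE absz_nat abszX Euclid_dvdX // => /andP[] //.
have hu2 k : (1 < k)%N -> (p'.+1%:Z ^+ 2 %| u ^+ k)%Z.
  move=> k1; rewrite -(subnKC k1) exprD; apply: dvdz_mulr.
  exact: dvdz_exp2r.
case: p' pp op p2 hS hN hu {hu2} (hu2) => [//|p''] pp op p2 hS hN hu hu2.
rewrite big_ord_recl /= expr0 bin1 natz.
have -> : forall a b c : int, a + b + c - a = b + c by move=> a b c; lia.
apply: rpredD; last by apply: hu2; case: p'' p2 {pp op hS hN hu}.
apply: rpred_sum => j _.
case: (posnP j) => [j0|jp]; last first.
  rewrite -mulr_natr; apply: dvdz_mulr; apply: hu2.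
  by rewrite /bump /= ltnS.
rewrite /bump /= j0 expr1 -mulr_natr expr2; apply: dvdz_mul => //.
rewrite dvdzE absz_nat natz absz_nat; apply: prime_dvd_bin => //=.
Qed.
Lemma powstep (a n : nat) : (2 <= a)%N -> (1 <= n)%N -> (n * (a+1) + 2 <= a ^ n)%N ->
  (n.+1 * (a+1) + 2 <= a ^ n.+1)%N.
Proof. move=> a2 n1 h; rewrite expnS; nia. Qed.

Lemma powbound (a n : nat) : (2 <= a)%N -> (3 <= n)%N -> (a != 2)%N || (5 <= n)%N ->
  (n * (a+1) + 2 <= a ^ n)%N.
Proof.
move=> a2 n3 /orP[a3|n5].
  have {}a3 : (3 <= a)%N by lia.
  rewrite -(subnK n3); elim: (n - 3)%N => [|m IH].
    rewrite add0n !expnS expn0; nia.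
  by rewrite addSn; apply: powstep => //; lia.
rewrite -(subnK n5); elim: (n - 5)%N => [|m IH].
  have h4 : (2 ^ 4 <= a ^ 4)%N by rewrite leq_exp2r.
  rewrite add0n expnS; move: h4; rewrite [(2 ^ 4)%N]/=; nia.
by rewrite addSn; apply: powstep => //; lia.
Qed.


Lemma small_pow (b q : nat) : (3 <= q)%N -> odd q -> (b ^ q = 2 \/ b ^ q = 9)%N -> False.
Proof.
move=> q3 oq h.
have hq : (b ^ 3 <= b ^ q)%N.
  case: b h => [|b] h; first by rewrite exp0n.
  by apply: leq_pexp2l.
case: b hq h => [|[|[|b]]] hq h.
- by rewrite exp0n in h; [case: h | lia].
- by rewrite exp1n in h; case: h.
- by case: h => h; have := oddX 2 q; rewrite h /= orbF => /eqP q0; lia.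
- move: hq; rewrite !expnS expn0 => hq; lia.
Qed.

Lemma exists_ell (p q : nat) (x y : int) : prime p -> prime q -> odd p -> odd q ->
  x != 0 -> y != 0 -> x ^+ p - y ^+ q = 1 ->
  exists l : nat, [/\ prime l, l != p & (l%:Z %| \sum_(i < p) x ^+ i)%Z].
Proof.
move=> pp pq op oq x0 y0 e.
have ey : y ^+ q = x ^+ p - 1.
  by rewrite -e opprB addrC subrK.
have p3 : (3 <= p)%N by have := prime_gt1 pp; case: p op {pp e ey} => [|[|[|]]].
have q3 : (3 <= q)%N by have := prime_gt1 pq; case: q oq {pq e ey} => [|[|[|]]].
have yq0 : y ^+ q != 0 by rewrite expf_neq0.
have x1 : x != 1.
  by apply: contraNneq yq0 => x1; rewrite ey x1 expr1n subrr.
set N := \sum_(i < p) x ^+ i.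
have eN : y ^+ q = (x - 1) * N by rewrite ey subrX1.
have N0 : N != 0 by apply: contraNneq yq0 => N0; rewrite eN N0 mulr0.
have m0 : (0 < `|N|)%N by rewrite absz_gt0.
have [m' cop em] := pfactor_coprime pp m0.
case: (ltnP 1 m') => [m1 | m1].
  exists (pdiv m'); split; first exact: pdiv_prime.
    apply/eqP => ep; move: cop; rewrite prime_coprime // -ep pdiv_dvd //.
  by rewrite dvdzE absz_nat em; apply: dvdn_mulr; apply: pdiv_dvd.
exfalso.
have m'1 : m' = 1%N by move: m0; rewrite em; case: m' m1 {cop em} => [|[|]].
rewrite m'1 mul1n in em; set k := logn p `|N| in em.
case: (leqP 2 k) => k2.
  have hp2 : (p%:Z ^+ 2 %| N)%Z.
    by rewrite dvdzE abszX absz_nat em dvdn_exp2l.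
  have hp : (p%:Z %| N)%Z.
    by rewrite dvdzE absz_nat em; apply: dvdn_exp => //; lia.
  have := rpredB hp2 (Nmod p x pp op x1 hp); rewrite opprB addrC subrK.
  rewrite dvdzE abszX absz_nat => /dvdn_leq; rewrite prime_gt0 // => /(_ isT).
  lia.
have Np : (`|N| <= p)%N by rewrite em -{2}(expn1 p) leq_pexp2l ?prime_gt0.
set a := `|x|%N.
case: (leqP a 1) => a1.
  have xm1 : x = -1 by lia.
  apply: (@small_pow `|y|%N q) => //; left.
  rewrite -abszX ey xm1 -signr_odd op expr1.
  by [].
case: (boolP ((a != 2)%N || (5 <= p)%N)) => h.
  have hb := powbound a p a1 p3 h.
  have h1 : (`|x ^+ p|%N <= `|y ^+ q|%N + 1)%N by rewrite ey; lia.
  rewrite abszX eN abszM in h1.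
  have h2 : (`|x - 1| <= a + 1)%N by lia.
  have h3 : (`|x - 1| * `|N| <= (a + 1) * p)%N by apply: leq_mul.
  rewrite -/a in h1; move: h1 h3 hb; set P := (`|x - 1| * `|N|)%N; set A := (a ^ p)%N; set Q := ((a + 1) * p)%N.
  have : (p * (a + 1) = Q)%N by rewrite /Q mulnC.
  lia.
have a2 : a = 2%N by lia.
have ep3 : p = 3%N by move: h op p3; rewrite a2 /=; case: p {pp e ey eN N Np em k k2 m' cop m1 m'1 m0 N0} => [|[|[|[|[|]]]]].
have [x2|x2] : x = 2 \/ x = -2 by lia.
  by move: Np; rewrite /N ep3 x2 !big_ord_recr big_ord0 /=.
apply: (@small_pow `|y|%N q) => //; right.
by rewrite -abszX ey ep3 x2.
Qed.

Lemma prime_prim (R : fieldType) n (z : R) : prime n -> z ^+ n = 1 -> z != 1 ->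
  n.-primitive_root z.
Proof.
move=> pn zn z1; have [m pm mn] := prim_order_exists (prime_gt0 pn) zn.
case: (m =P 1%N) => [m1|/eqP m1].
  by move: pm; rewrite m1 => /prim_expr_order; rewrite expr1 => z1'; rewrite z1' eqxx in z1.
by have := prime_nt_dvdP pn m1 mn => <-.
Qed.

Lemma gal_det (L : splittingFieldType rat) (zeta : L) : <<1; zeta>>%VS = fullv ->
  forall tau sigma : galQ L, tau zeta = sigma zeta -> tau = sigma.
Proof.
move=> gen tau sigma e; apply/eqP/gal_eqP => v _.
have : v \in <<1; zeta>>%VS by rewrite gen memvf.
case/Fadjoin_polyP => P /polyOver1P [Q ->] ->.
rewrite -!horner_map /= e; congr (_.[_]); rewrite -!map_poly_comp.
by apply: eq_map_poly => a /=; rewrite !rmorph_alg.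
Qed.


Definition ip (n : int) : nat := if (0 <= n) then `|n|%N else 0%N.
Definition im (n : int) : nat := if (n < 0) then `|n|%N else 0%N.

Lemma ipim (R : fieldType) (a : R) (n : int) : a != 0 -> a ^ n * a ^+ im n = a ^+ ip n.
Proof.
move=> a0; case: n => m; rewrite /ip /im /=.
  by rewrite expr0 mulr1.
by rewrite NegzE -exprnN mulVf // expf_neq0.
Qed.

Lemma evalP (R : comNzRingType) (I : finType) (x : int) (k : I -> nat) (e : I -> nat) (z : R) :
  (map_poly intr (\prod_(i : I) (x%:P - 'X^(k i)) ^+ e i)).[z] =
  \prod_(i : I) (x%:~R - z ^+ k i) ^+ e i.
Proof.
rewrite rmorph_prod horner_prod; apply: eq_bigr => i _.
by rewrite rmorphXn /= horner_exp rmorphB /= map_polyC map_polyXn !hornerE.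
Qed.

Lemma indep (p : nat) (x : int) (L : splittingFieldType rat) (zeta : L) (t : ZG L) :
  prime p -> p.-primitive_root zeta -> <<1; zeta>>%VS = fullv ->
  (exists l : nat, [/\ prime l, l != p & (l%:Z %| \sum_(i < p) x ^+ i)%Z]) ->
  (forall tau : galQ L, tau (x%:~R - zeta) != 0) ->
  zgact t (x%:~R - zeta) = 1 -> t = 0.
Proof.
move=> pp pz gen [l [pl lp ldiv]] w0 ht.
apply/ffunP => s0; rewrite ffunE.
have kP (tau : galQ L) := aut_prim_rootP tau pz.
pose k tau := (s2val (kP tau) %% p)%N.
have kE (tau : galQ L) : tau zeta = zeta ^+ k tau by rewrite prim_expr_mod //; case: (kP tau).
have klt (tau : galQ L) : (k tau < p)%N by rewrite ltn_pmod // prime_gt0.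
have kc (tau : galQ L) : coprime (k tau) p by rewrite coprime_modl; case: (kP tau).
have kinj (tau : galQ L) : k tau = k s0 -> tau = s0.
  by move=> e; apply: (gal_det _ _ gen); rewrite !kE e.
pose F := [the fieldType of 'F_l].
pose xF : F := x%:~R.
have charF : l \in [char F] := pchar_Fp pl.
have NF : \sum_(i < p) xF ^+ i = 0.
  have -> : \sum_(i < p) xF ^+ i = (\sum_(i < p) x ^+ i)%:~R.
    by rewrite rmorph_sum; apply: eq_bigr => i _; rewrite rmorphXn.
  by apply/eqP; rewrite -(dvdz_pcharf charF).
have xp : xF ^+ p = 1 by apply/eqP; rewrite -subr_eq0 subrX1 NF mulr0.
have xn1 : xF != 1.
  apply/eqP => x1; move: NF; rewrite x1.
  under eq_bigr do rewrite expr1n.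
  rewrite sumr_const card_ord => /eqP; rewrite -(dvdn_pcharf charF).
  by rewrite dvdn_prime2 // (negbTE lp).
have pxF : p.-primitive_root xF by apply: prime_prim.
have pxk : p.-primitive_root (xF ^+ k s0) by rewrite prim_root_exp_coprime.
have [j ej] := prim_rootP pxk xp.
pose r := xF ^+ j.
have rk : r ^+ k s0 = xF by rewrite /r -exprM mulnC exprM -ej.
have pr : p.-primitive_root r.
  apply: prime_prim => //; first by rewrite /r -exprM mulnC exprM xp expr1n.
  by apply: contraNneq xn1 => r1; rewrite -rk r1 expr1n.
pose c tau := xF - r ^+ k tau.
have c0 tau : (c tau == 0) = (tau == s0).
  rewrite /c subr_eq0 -rk eq_sym (eq_prim_root_expr pr) !modn_small //.
  by apply/eqP/eqP => [/kinj|->].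
pose Pp : {poly int} := \prod_(tau : galQ L) (x%:P - 'X^(k tau)) ^+ ip (t tau).
pose Pn : {poly int} := \prod_(tau : galQ L) (x%:P - 'X^(k tau)) ^+ im (t tau).
have eL : (map_poly intr Pp).[zeta] = (map_poly intr Pn).[zeta] :> L.
  rewrite !evalP.
  have tw (tau : galQ L) : x%:~R - zeta ^+ k tau = tau (x%:~R - zeta).
    by rewrite rmorphB rmorph_int; congr (_ - _); rewrite -kE.
  under eq_bigr do rewrite tw.
  under [RHS]eq_bigr do rewrite tw.
  transitivity (zgact t (x%:~R - zeta) *
     \prod_(tau : galQ L) (tau (x%:~R - zeta)) ^+ im (t tau)); last by rewrite ht mul1r.
  rewrite /zgact -big_split /=; apply: eq_bigr => tau _.
  by rewrite ipim.
pose D := Pp - Pn.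
have Phim : 'Phi_p \is monic := Cyclotomic_monic p.
have eD := Pdiv.RingMonic.rdivp_eq Phim D.
set Qd := Pdiv.CommonRing.rdivp _ _ in eD.
set R := Pdiv.CommonRing.rmodp _ _ in eD.
have sR : (size R < size 'Phi_p)%N by rewrite Pdiv.Ring.ltn_rmodp monic_neq0.
have R0 : R = 0.
  have eR : R = D - Qd * 'Phi_p by rewrite eD addrAC subrr add0r.
  have rR : root (map_poly (in_alg L) (map_poly (intr : int -> rat) R)) zeta.
    rewrite -map_poly_comp (eq_map_poly (rmorph_int (in_alg L))).
    rewrite eR /root !rmorphB rmorphM !hornerE /= eL subrr.
    by rewrite (rootP (Phi_root _ _ _ pz)) mulr0 subrr.
  have dv := cyclo_min _ _ _ _ pz rR.
  apply/eqP; apply/negP => /negP nR.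
  have mR : map_poly (intr : int -> rat) R != 0.
    by rewrite -size_poly_eq0 size_map_inj_poly ?size_poly_eq0 //; apply: intr_inj.
  have := dvdp_leq mR dv; rewrite !size_map_inj_poly //; try exact: intr_inj.
  by rewrite leqNgt sR.
have eF : (map_poly intr Pp).[r] = (map_poly intr Pn).[r] :> F.
  have : (map_poly intr D).[r] = 0 :> F.
    by rewrite eD R0 addr0 rmorphM hornerM (rootP (Phi_root _ _ _ pr)) mulr0.
  by rewrite rmorphB !hornerE => /eqP; rewrite subr_eq0 => /eqP.
rewrite !evalP in eF.
have c0' (tau : galQ L) : (x%:~R - r ^+ k tau == 0 :> F) = (tau == s0) := c0 tau.
have h (e : galQ L -> nat) :
    (\prod_(tau : galQ L) (x%:~R - r ^+ k tau) ^+ e tau == 0 :> F) = (0 < e s0)%N.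
  apply/prodf_eq0/idP => [[tau _]|e0]; first by rewrite expf_eq0 c0' => /andP[e0 /eqP<-].
  by exists s0 => //; rewrite expf_eq0 c0' eqxx e0.
have := h (fun tau => ip (t tau)); rewrite eF h.
by case: (t s0) => m; rewrite /ip /im /=; [case: m|].
Qed.

Lemma dimL (p : nat) (L : splittingFieldType rat) (zeta : L) :
  prime p -> p.-primitive_root zeta -> <<1; zeta>>%VS = fullv ->
  (\dim (fullv : {vspace L}) < p)%N.
Proof.
move=> pp pz gen.
rewrite -gen dim_Fadjoin dimv1 muln1.
have ov : map_poly (intr : int -> L) 'Phi_p \is a polyOver 1%VS.
  apply/polyOver1P; exists (map_poly intr 'Phi_p); rewrite -map_poly_comp.
  by apply: eq_map_poly => b; symmetry; exact: (rmorph_int (in_alg L)).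
have dv := minPoly_dvdp ov (Phi_root _ _ _ pz).
have nz : map_poly (intr : int -> L) 'Phi_p != 0.
  by apply: monic_neq0; apply: monic_map; apply: Cyclotomic_monic.
have := dvdp_leq nz dv; rewrite size_minPoly.
rewrite size_map_poly_id0; last by rewrite (monicP (Cyclotomic_monic p)) oner_eq0.
by rewrite size_Cyclotomic totient_prime // prednK // prime_gt0.
Qed.

Lemma noroot (p q : nat) (L : splittingFieldType rat) (zeta : L) (a : L) :
  prime p -> prime q -> p != q -> (2 < q)%N -> p.-primitive_root zeta ->
  <<1; zeta>>%VS = fullv -> a ^+ q = 1 -> a = 1.
Proof.
move=> pp pq pneq q2 pz gen aq; apply/eqP/negPn/negP => a1.
have pa : q.-primitive_root a := prime_prim _ _ _ pq aq a1.
have cpq : coprime p q by rewrite prime_coprime // dvdn_prime2.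
have cqp : coprime q p by rewrite coprime_sym.
have pw : (p * q).-primitive_root (zeta * a).
  have n0 : (0 < p * q)%N by rewrite muln_gt0 !prime_gt0.
  have wpq : (zeta * a) ^+ (p * q) = 1.
    by rewrite exprMn exprM (prim_expr_order pz) expr1n mulnC exprM aq expr1n mulr1.
  have [m pm mdvd] := prim_order_exists n0 wpq.
  suff h : (p * q %| m)%N by have -> : (p * q)%N = m by apply/eqP; rewrite eqn_dvd h mdvd.
  have wm : (zeta * a) ^+ m = 1 := prim_expr_order pm.
  rewrite Gauss_dvd //; apply/andP; split.
    rewrite -(Gauss_dvdl _ cpq) (prim_order_dvd pz); apply/eqP.
    have aq' : a ^+ (m * q) = 1 by rewrite mulnC exprM aq expr1n.
    by move: (congr1 (fun v => v ^+ q) wm); rewrite /= expr1n -exprM exprMn aq' mulr1.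
  rewrite -(Gauss_dvdl _ cqp) (prim_order_dvd pa); apply/eqP.
  have zp' : zeta ^+ (m * p) = 1 by rewrite mulnC exprM (prim_expr_order pz) expr1n.
  by move: (congr1 (fun v => v ^+ p) wm); rewrite /= expr1n -exprM exprMn zp' mul1r.
have [Q eQ] := polyOver1P (minPolyOver 1 (zeta * a)).
have rQ : root (map_poly (in_alg L) Q) (zeta * a) by rewrite -eQ root_minPoly.
have dv := cyclo_min _ _ _ _ pw rQ.
have sQ : size Q = (adjoin_degree 1 (zeta * a)).+1 by rewrite -size_minPoly eQ size_map_poly.
have Q0 : Q != 0 by rewrite -size_poly_eq0 sQ.
have := dvdp_leq Q0 dv; rewrite sQ size_map_inj_poly; last 2 first.
- exact: intr_inj.
- by [].
rewrite size_Cyclotomic totient_coprime // !totient_prime //.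
have h1 : (adjoin_degree 1 (zeta * a) <= \dim (fullv : {vspace L}))%N.
  by rewrite adjoin_degreeE dimv1 divn1 dimvS // subvf.
have h2 := dimL _ _ _ pp pz gen.
have p2 := prime_gt1 pp.
nia.
Qed.

Theorem mainTheorem10 (p q : nat) (x y : int)
  (L : splittingFieldType rat) (zeta : L) :
  prime p -> prime q -> odd p -> odd q -> p != q ->
  x != 0 -> y != 0 -> x ^+ p - y ^+ q = 1 ->
  p.-primitive_root zeta -> <<1; zeta>>%VS = fullv ->
  let X := fun theta : ZG L =>
    exists alpha : L, alpha != 0 /\ zgact theta (x%:~R - zeta) = alpha ^+ q in
  [/\ X 0, (forall t1 t2, X t1 -> X t2 -> X (t1 - t2)),
      (forall theta (a b : L), a != 0 -> b != 0 ->
         zgact theta (x%:~R - zeta) = a ^+ q ->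
         zgact theta (x%:~R - zeta) = b ^+ q -> a = b) &
      exists f : ZG L -> L,
        [/\ (forall theta, X theta ->
               f theta != 0 /\ zgact theta (x%:~R - zeta) = f theta ^+ q),
            (forall t1 t2, X t1 -> X t2 -> f (t1 + t2) = f t1 * f t2) &
            (forall t1 t2, X t1 -> X t2 -> f t1 = f t2 -> t1 = t2)]].
Proof.
move=> pp pq op oq pneq x0 y0 e pz gen X.
have ell := exists_ell p q x y pp pq op oq x0 y0 e.
rewrite /X; clear X; set w := x%:~R - zeta.
have q2 : (2 < q)%N by have := prime_gt1 pq; case: q oq {pq e ell pneq} => [|[|[|]]].
have ey : y ^+ q = x ^+ p - 1 by rewrite -e opprB addrC subrK.
have w0 : w != 0.
  apply/eqP => /eqP; rewrite subr_eq0 => /eqP xz.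
  have h : (x ^+ p)%:~R = 1 :> L by rewrite rmorphXn /= xz (prim_expr_order pz).
  have xp1 : x ^+ p = 1.
    apply: (intr_inj : injective (intr : int -> rat)); apply: (fmorph_inj (in_alg L)).
    by rewrite !(rmorph_int (in_alg L)) h.
  have : y ^+ q == 0 by rewrite ey xp1 subrr.
  by rewrite expf_eq0 (negbTE y0) andbF.
have tw0 (tau : galQ L) : tau w != 0 by rewrite fmorph_eq0.
have uniq (a b : L) : a != 0 -> b != 0 -> a ^+ q = b ^+ q -> a = b.
  move=> a0 b0 eab.
  have : (a / b) ^+ q = 1 by rewrite exprMn exprVn eab divff // expf_neq0.
  move/(noroot p q L zeta _ pp pq pneq q2 pz gen) => h.
  by rewrite -(divfK b0 a) h mul1r.
have zg0 : zgact 0 w = 1 by rewrite /zgact big1 // => tau _; rewrite ffunE expr0z.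
have zgD t1 t2 : zgact (t1 + t2) w = zgact t1 w * zgact t2 w.
  by rewrite /zgact -big_split; apply: eq_bigr => tau _; rewrite ffunE expfzDr.
have zgN t : zgact (- t) w = (zgact t w)^-1.
  by rewrite /zgact -prodfV; apply: eq_bigr => tau _; rewrite ffunE invr_expz.
have ind t : zgact t w = 1 -> t = 0 := indep p x L zeta t pp pz gen ell tw0.
have XD t1 t2 : (exists alpha : L, alpha != 0 /\ zgact t1 w = alpha ^+ q) ->
   (exists alpha : L, alpha != 0 /\ zgact t2 w = alpha ^+ q) ->
   (exists alpha : L, alpha != 0 /\ zgact (t1 - t2) w = alpha ^+ q).
  move=> [a1 [a10 e1]] [a2 [a20 e2]]; exists (a1 / a2); split.
    by rewrite mulf_neq0 // invr_neq0.
  by rewrite zgD zgN e1 e2 exprMn exprVn.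
have X0 : exists alpha : L, alpha != 0 /\ zgact 0 w = alpha ^+ q.
  by exists 1; split; [exact: oner_neq0 | rewrite zg0 expr1n].
have XA t1 t2 : (exists alpha : L, alpha != 0 /\ zgact t1 w = alpha ^+ q) ->
   (exists alpha : L, alpha != 0 /\ zgact t2 w = alpha ^+ q) ->
   (exists alpha : L, alpha != 0 /\ zgact (t1 + t2) w = alpha ^+ q).
  move=> h1 h2; have -> : t1 + t2 = t1 - (0 - t2) by rewrite sub0r opprK.
  by apply: (XD) => //; apply: (XD).
split => //.
  by move=> theta a b a0 b0 ea eb; apply: uniq => //; rewrite -ea -eb.
pose f theta := epsilon (inhabits (0 : L))
   (fun alpha => alpha != 0 /\ zgact theta w = alpha ^+ q).
have fP theta : (exists alpha : L, alpha != 0 /\ zgact theta w = alpha ^+ q) ->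
    f theta != 0 /\ zgact theta w = f theta ^+ q.
  by move=> h; apply: (epsilon_spec (inhabits (0 : L)) _ h).
exists f; split.
- exact: fP.
- move=> t1 t2 h1 h2.
  have [n12 e12] := fP _ (XA _ _ h1 h2).
  have [n1 e1] := fP _ h1; have [n2 e2] := fP _ h2.
  by apply: uniq => //; [rewrite mulf_neq0 | rewrite -e12 exprMn -e1 -e2 zgD].
- move=> t1 t2 h1 h2 ef; apply/eqP; rewrite -subr_eq0; apply/eqP; apply: ind.
  have [n1 e1] := fP _ h1; have [n2 e2] := fP _ h2.
  by rewrite zgD zgN e1 e2 ef divff // expf_neq0.
Qed.
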